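(* Let $k$ be a field of characteristic $p >0$, let $d_1,\ldots,d_n$ be positive integers, let $A=k[x_1, \ldots, x_n]/(x_1^{d_1}, \ldots, x_n^{d_n})$, and let $t = \sum_{i=1}^n (d_i - 1)$. Let $m$ be a positive integer such that $m+t <2p$. Then for every integer $i$ with $0\le i \le (t-m)/2$, the map $A_i \to A_{i+m}$ given by $f \mapsto f \cdot (x_1+ \dots +x_n)^m$ is injective.
   Context: $A$ is graded by degree, $A=\bigoplus_{i\ge 0}A_i$, with $A_i$ the image of the homogeneous polynomials of degree $i$. *)

(* Defs.v *)
From HB Require Import structures.
From mathcomp Require Import all_boot all_order all_algebra.
From mathcomp Require Import multinomials.mpoly.
Set Implicit Arguments. Unset Strict Implicit. Unset Printing Implicit Defensive.
Import GRing.Theory.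
Local Open Scope ring_scope.

Definition in_mon_ideal (k : fieldType) (n : nat) (d : 'I_n -> nat)
  (f : {mpoly k[n]}) : Prop :=
  exists g : 'I_n -> {mpoly k[n]}, f = \sum_(j < n) g j * 'X_j ^+ d j.

Definition lin_form (k : fieldType) (n : nat) : {mpoly k[n]} :=
  \sum_(j < n) 'X_j.

(* Main.v *)
Require Import Defs.
From HB Require Import structures.
From mathcomp Require Import all_boot all_order all_algebra.
From mathcomp Require Import multinomials.mpoly.
From mathcomp Require Import zify.
Set Implicit Arguments. Unset Strict Implicit. Unset Printing Implicit Defensive.
Import GRing.Theory.
Local Open Scope ring_scope.

Section Bool.
Variables (K : fieldType) (T : finType).
Implicit Types (H F G : {set T} -> K) (S X Y Z : {set T}).

Definition U1 H : {set T} -> K := fun S => \sum_(y in S) H (S :\ y).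
Definition V m H := iter m U1 H.
Definition shx (x : T) H : {set T} -> K := fun S => H (x |: S).

Lemma VS m H S : V m.+1 H S = \sum_(y in S) V m H (S :\ y).
Proof. by []. Qed.

Lemma V_zero m H S :
  (forall S', S' \subset S -> #|S'| = (#|S| - m)%N -> H S' = 0) -> V m H S = 0.
Proof.
elim: m S => [|m IH] S hS; first by apply: hS => //; rewrite subn0.
rewrite VS big1 // => y yS; apply: IH => S' sS' cS'.
apply: hS; first by apply: subset_trans sS' (subsetDl _ _).
rewrite cS'; move: (cardsD1 y S); rewrite yS => ->; lia.
Qed.

Lemma V_card m H S : #|S| = m -> V m H S = H set0 *+ m`!.
Proof.
elim: m S => [|m IH] S cS.
  by move/eqP: cS; rewrite cards_eq0 => /eqP ->.
rewrite VS (eq_bigr (fun _ => H set0 *+ m`!)).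
  by rewrite sumr_const cS -mulrnA factS mulnC.
move=> y yS; apply: IH; move: (cardsD1 y S); rewrite yS cS; lia.
Qed.

Lemma U1_shift H x S : x \notin S ->
  U1 H (x |: S) = H S + U1 (shx x H) S.
Proof.
move=> xS; rewrite /U1 (big_setU1 _ xS) /= setU1K //; congr (_ + _).
apply: eq_bigr => y yS; rewrite /shx; congr H.
apply/setP => z; rewrite !inE; case: (z =P y) => [->|] //=.
by rewrite orbF; apply/esym/negbTE; apply: contraNneq xS => <-.
Qed.

Lemma V_shift m F x S : x \notin S ->
  V m.+1 F (x |: S) = V m.+1 (shx x F) S + (m.+1)%:R * V m F S.
Proof.
elim: m S => [|m IH] S xS.
  by rewrite /V /= U1_shift // mul1r addrC.
have -> : V m.+2 F (x |: S) = U1 (V m.+1 F) (x |: S) by [].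
rewrite U1_shift //.
have -> : U1 (shx x (V m.+1 F)) S =
   \sum_(y in S) (V m.+1 (shx x F) (S :\ y) + (m.+1)%:R * V m F (S :\ y)).
  apply: eq_bigr => y yS; rewrite /shx -IH //.
  by rewrite !inE negb_and xS orbT.
rewrite big_split /= -mulr_sumr.
have -> : \sum_(y in S) V m.+1 (shx x F) (S :\ y) = V m.+2 (shx x F) S by [].
have -> : \sum_(i in S) V m F (S :\ i) = V m.+1 F S by [].
rewrite (mulrSr _ m.+1) mulrDl mul1r.
change (U1 (V m F) S) with (V m.+1 F S).
change (U1 (U1 (V m (shx x F))) S) with (V m.+2 (shx x F) S).
by rewrite addrCA [_ + V m.+1 F S]addrC.
Qed.

Lemma exists_sub X k : (k <= #|X|)%N -> exists S, S \subset X /\ #|S| = k.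
Proof.
elim: k => [|k IH] hk; first by exists set0; rewrite sub0set cards0.
have [S [sSX cS]] := IH (ltnW hk).
have : (0 < #|X :\: S|)%N by rewrite cardsD (setIidPr sSX) cS subn_gt0.
rewrite card_gt0 => /set0Pn [y]; rewrite inE => /andP [yS yX].
exists (y |: S); split; first by rewrite subUset sub1set yX sSX.
by rewrite cardsU1 yS cS.
Qed.

Lemma fact_neq0 N : (forall k, (0 < k <= N)%N -> (k%:R : K) != 0) ->
  ((N`!)%:R : K) != 0.
Proof.
elim: N => [|N IH] h; first by rewrite oner_eq0.
rewrite factS natrM mulf_neq0 //; first by apply: h; rewrite /= leqnn.
by apply: IH => k /andP [k0 kN]; apply: h; rewrite k0 /= ltnW.
Qed.

Lemma bool_inj N : forall X i m F, #|X| = N -> (2 * i + m <= #|X|)%N ->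
  (forall k, (0 < k <= i + m)%N -> (k%:R : K) != 0) ->
  (forall Y, Y \subset X -> #|Y| = (i + m)%N -> V m F Y = 0) ->
  forall S, S \subset X -> #|S| = i -> F S = 0.
Proof.
elim: N => [|N IH] X i m F cX him hk hV S sSX cS.
  have i0 : i = 0%N by move: him; rewrite cX; lia.
  have m0 : m = 0%N by move: him; rewrite cX; lia.
  by have := hV S sSX; rewrite cS i0 m0 => /(_ erefl).
case: i him hk hV cS => [|i] him hk hV cS.
  move/eqP: cS; rewrite cards_eq0 => /eqP ->.
  have [Y [sT cT]] := exists_sub (k := m) (X := X) (ltac:(move: him; lia)).
  have := hV Y sT cT; rewrite (V_card _ cT) => /eqP.
  rewrite -mulr_natr mulf_eq0 (negbTE (fact_neq0 _)) ?orbF => [/eqP //|].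
  by move=> k /andP [k0 km]; apply: hk; rewrite k0.
case: m him hk hV => [|m] him hk hV.
  by have := hV S sSX; rewrite cS addn0 => /(_ erefl).
have : (0 < #|X|)%N by rewrite cX.
rewrite card_gt0 => /set0Pn [x xX].
set X' := X :\ x.
have cX' : #|X'| = N by rewrite /X'; move: (cardsD1 x X); rewrite xX cX; lia.
have sX'X : X' \subset X by apply: subsetDl.
have xX' : x \notin X' by rewrite !inE eqxx.
set G := shx x F.
have claim1 : forall Z, Z \subset X' -> #|Z| = (i.+1 + m)%N ->
    V m.+1 G Z + (m.+1)%:R * V m F Z = 0.
  move=> Z sT cT.
  have xT : x \notin Z by apply: contra xX'; apply: (subsetP sT).
  rewrite -V_shift //; apply: hV.
    by rewrite subUset sub1set xX (subset_trans sT sX'X).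
  by rewrite cardsU1 xT cT; lia.
have claim2 : forall Y, Y \subset X' -> #|Y| = (i.+1 + m.+1)%N -> V m.+2 G Y = 0.
  move=> Y sT cT.
  have -> : V m.+2 G Y = V m.+2 G Y + (m.+1)%:R * V m.+1 F Y.
    by rewrite (hV Y (subset_trans sT sX'X) cT) mulr0 addr0.
  have -> : V m.+2 G Y + (m.+1)%:R * V m.+1 F Y =
     \sum_(y in Y) (V m.+1 G (Y :\ y) + (m.+1)%:R * V m F (Y :\ y)).
    by rewrite big_split /= -mulr_sumr.
  apply: big1 => y yT; apply: claim1.
    by apply: subset_trans sT; apply: subsetDl.
  by move: (cardsD1 y Y); rewrite yT cT; lia.
have hG : forall S', S' \subset X' -> #|S'| = i -> G S' = 0.
  apply: (IH X' i m.+2 G cX'); first by rewrite cX'; move: him; rewrite cX; lia.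
    by move=> k /andP [k0 km]; apply: hk; rewrite k0 /=; move: km; lia.
  by move=> Y sT cT; apply: claim2 => //; rewrite cT; lia.
have hF : forall S', S' \subset X' -> #|S'| = i.+1 -> F S' = 0.
  apply: (IH X' i.+1 m F cX'); first by rewrite cX'; move: him; rewrite cX; lia.
    by move=> k /andP [k0 km]; apply: hk; rewrite k0 /=; move: km; lia.
  move=> Y sT cT; have := claim1 Y sT cT.
  rewrite (V_zero (m := m.+1) (H := G) (S := Y)); last first.
    move=> S' sS' cS'; apply: hG; first exact: subset_trans sS' sT.
    by rewrite cS' cT; lia.
  rewrite add0r => /eqP; rewrite mulf_eq0 => /orP [/eqP|/eqP //] h.
  by have := hk m.+1; rewrite h eqxx; move/(_ ltac:(lia)).
case xS: (x \in S).
  have -> : S = x |: (S :\ x) by rewrite setD1K.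
  rewrite -/(shx x F (S :\ x)); apply: hG.
    by apply: setSD.
  by move: (cardsD1 x S); rewrite xS cS; lia.
apply: hF => //; apply/subsetP => y yS; rewrite !inE (subsetP sSX) // andbT.
by apply: contraFneq xS => <-.
Qed.

End Bool.

Section Mp.
Variables (k : fieldType) (n : nat).
Implicit Types (h : {mpoly k[n]}) (b : 'X_{1..n}).

Lemma mcoeffMXg h u b :
  (h * 'X_[u])@_b = if (u <= b)%MM then h@_(b - u) else 0.
Proof.
case: ifP => hub.
  transitivity ((h * 'X_[u])@_(u + (b - u))); last exact: mcoeffMX.
  by rewrite addmC submK.
apply/eqP; rewrite mcoeff_eq0 (perm_mem (msuppMX _ _)).
apply/negP => /mapP [m' _ bE]; by move: hub; rewrite bE lem_addr.
Qed.

Lemma mcoeffML h b :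
  (h * lin_form k n)@_b = \sum_(j < n) (if (0 < b j)%N then h@_(b - U_(j)) else 0).
Proof.
rewrite /lin_form mulr_sumr raddf_sum /=; apply: eq_bigr => j _.
rewrite mcoeffMXg; congr (if _ then _ else _).
apply/mnm_lepP/idP => [/(_ j)|hb i]; first by rewrite mnm1E eqxx.
by rewrite mnm1E; case: (j =P i) => [<-|] //.
Qed.

Definition factm b := (\prod_(j < n) (b j)`!)%N.

Lemma factmB b j : (0 < b j)%N -> factm b = (b j * factm (b - U_(j)))%N.
Proof.
move=> bj; rewrite /factm (bigD1 j) //= [in RHS](bigD1 j) //= mulnA.
congr (_ * _)%N.
  rewrite mnmBE mnm1E eqxx; case: (b j) bj => // c _; by rewrite factS subn1.
apply: eq_bigr => i ij; rewrite mnmBE mnm1E.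
by rewrite eq_sym (negbTE ij) subn0.
Qed.

Variable (d : 'I_n -> nat).
Definition NN := (\sum_(j < n) d j)%N.
Local Notation TT := ('I_n * 'I_NN)%type.
Definition fib (S : {set TT}) j := [set u in S | u.1 == j].
Definition prof (S : {set TT}) : 'X_{1..n} := [multinom #|fib S j| | j < n].
Implicit Types (S : {set TT}).
Definition HH h (S : {set TT}) := ((factm (prof S))%:R : k) * h@_(prof S).

Lemma profE S j : prof S j = #|fib S j|.
Proof. by rewrite mnmE. Qed.

Lemma prof_D1 S y : y \in S -> prof (S :\ y) = (prof S - U_(y.1))%MM.
Proof.
move=> yS; apply/mnmP => j; rewrite mnmBE mnm1E !profE.
case: (y.1 =P j) => [yj|yj].
  have -> : fib (S :\ y) j = fib S j :\ y.
    by apply/setP => u; rewrite !inE andbA.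
  by move: (cardsD1 y (fib S j)); rewrite !inE yS yj eqxx /=; lia.
rewrite subn0; suff -> : fib (S :\ y) j = fib S j by [].
apply/setP => u; rewrite !inE.
case: (u =P y) => [->|] //=; by rewrite (introF eqP yj) andbF.
Qed.

Lemma sum_by_fst S (psi : 'I_n -> k) :
  \sum_(y in S) psi y.1 = \sum_(j < n) psi j *+ #|fib S j|.
Proof.
rewrite (partition_big (fun y : TT => y.1) predT) //=; apply: eq_bigr => j _.
rewrite -sumr_const; apply: eq_big => [u|u]; first by rewrite !inE.
by move=> /andP [_ /eqP ->].
Qed.

Lemma U1_HH h S : U1 (HH h) S = HH (h * lin_form k n) S.
Proof.
rewrite /U1 /HH mcoeffML mulr_sumr.
rewrite (eq_bigr (fun y : TT => (factm (prof S - U_(y.1)))%:R * h@_(prof S - U_(y.1)))); last first.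
  by move=> y yS; rewrite prof_D1.
rewrite (sum_by_fst S (fun j => (factm (prof S - U_(j)))%:R * h@_(prof S - U_(j)))).
apply: eq_bigr => j _; rewrite -profE.
case: ifP => [bj|]; last by move/negbT; rewrite -leqNgt leqn0 => /eqP ->; rewrite mulr0 mulr0n.
by rewrite (factmB bj) natrM -[_ *+ prof S j]mulr_natl mulrA.
Qed.

Lemma V_HH m h S : V m (HH h) S = HH (h * lin_form k n ^+ m) S.
Proof.
elim: m S => [|m IH] S; first by rewrite expr0 mulr1.
rewrite VS (eq_bigr (fun y => HH (h * lin_form k n ^+ m) (S :\ y))); last by move=> y _; rewrite IH.
by rewrite -/(U1 _ S) U1_HH exprSr mulrA.
Qed.

Lemma card_fib_lt j c : (c <= NN)%N ->
  #|[set u : TT | (u.1 == j) && (u.2 < c)%N]| = c.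
Proof.
move=> hc.
have -> : [set u : TT | (u.1 == j) && (u.2 < c)%N] =
    [set (j, widen_ord hc l) | l : 'I_c].
  apply/setP => [[j' l]]; rewrite !inE /=; apply/idP/imsetP.
    move=> /andP [/eqP -> lc]; exists (Ordinal lc) => //.
    by congr pair; apply: val_inj.
  by move=> [l' _ [-> ->]]; rewrite eqxx /= ltn_ord.
rewrite card_imset ?card_ord //.
by move=> l1 l2 [] h; apply: val_inj.
Qed.

Lemma card_sum_fib S : #|S| = (\sum_(j < n) #|fib S j|)%N.
Proof.
rewrite -sum1_card (partition_big (fun y : TT => y.1) predT) //=.
apply: eq_bigr => j _; rewrite -sum1_card; apply: eq_bigl => u.
by rewrite !inE.
Qed.

Lemma ideal_coeff h : in_mon_ideal d h ->
  forall b, (forall j, b j < d j)%N -> h@_b = 0.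
Proof.
move=> [g ->] b hb; rewrite raddf_sum /=; apply: big1 => j _.
rewrite mpolyXn mcoeffMXg; case: ifP => // /mnm_lepP /(_ j).
by rewrite mulmnE mnm1E eqxx mul1n leqNgt hb.
Qed.

Definition pk (a : 'X_{1..n}) : option 'I_n := [pick j | (d j <= a j)%N].

Lemma ideal_of_coeff h :
  (forall b, (forall j, b j < d j)%N -> h@_b = 0) -> in_mon_ideal d h.
Proof.
move=> hb.
exists (fun j => \sum_(a <- msupp h | pk a == Some j) h@_a *: 'X_[a - U_(j) *+ d j]).
have hpk : forall a, a \in msupp h -> exists j, pk a = Some j /\ (d j <= a j)%N.
  move=> a; rewrite mcoeff_msupp /pk; case: pickP => [j hj|hn]; first by exists j.
  by rewrite hb ?eqxx // => j; move: (hn j) => /= /negbT; rewrite -ltnNge.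
rewrite [LHS]mpolyE.
have -> : \sum_(j < n) (\sum_(a <- msupp h | pk a == Some j)
          h@_a *: 'X_[a - U_(j) *+ d j]) * 'X_j ^+ d j =
   \sum_(j < n) \sum_(a <- msupp h) (if pk a == Some j then h@_a *: 'X_[a] else 0).
  apply: eq_bigr => j _; rewrite mulr_suml big_mkcond /=.
  apply: eq_big_seq => a ha; case: ifP => // /eqP hj.
  rewrite -scalerAl mpolyXn -mpolyXD submK //.
  apply/mnm_lepP => i; rewrite mulmnE mnm1E.
  case: (j =P i) => [<-|]; last by rewrite mul0n.
  have [j' [hj' hd]] := hpk a ha; move: hj; rewrite hj' => -[ej].
  by rewrite mul1n -ej.
rewrite exchange_big /=; apply: eq_big_seq => a ha.
have [j [hj _]] := hpk a ha.
rewrite (bigD1 j) //= hj eqxx big1 ?addr0 // => i ij.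
by case: ifP => // /eqP [] /esym /eqP; rewrite (negbTE ij).
Qed.

End Mp.

Theorem theorem2p2 (k : fieldType) (p : nat) (n : nat) (d : 'I_n -> nat)
  (m i : nat) :
  p \in [pchar k] ->
  (forall j, 0 < d j)%N ->
  (0 < m)%N ->
  (m + \sum_(j < n) (d j).-1 < 2 * p)%N ->
  (2 * i + m <= \sum_(j < n) (d j).-1)%N ->
  forall f : {mpoly k[n]}, f \is i.-homog ->
    in_mon_ideal d (f * lin_form k n ^+ m) -> in_mon_ideal d f.
Proof.
move=> hp hd hm ht hi f hf hI.
have hip : (i + m < p)%N by lia.
have hk : forall c, (0 < c <= i + m)%N -> (c%:R : k) != 0.
  move=> c /andP [c0 cim]; rewrite -(dvdn_pcharf hp) gtnNdvd //; lia.
have dNN : forall j, (d j <= NN d)%N.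
  by move=> j; rewrite /NN (bigD1 j) //= leq_addr.
pose X := [set u : ('I_n * 'I_(NN d))%type | (u.2 < (d u.1).-1)%N].
have fibX : forall j, #|fib X j| = (d j).-1.
  move=> j; rewrite -(@card_fib_lt n d j (d j).-1); last first.
    by apply: leq_trans (dNN j); apply: leq_pred.
  congr #|pred_of_set _|; apply/setP => u; rewrite !inE andbC.
  by case: (u.1 =P j) => [->|].
have cX : #|X| = (\sum_(j < n) (d j).-1)%N.
  by rewrite card_sum_fib; apply: eq_bigr => j _; rewrite fibX.
have main := @bool_inj k _ #|X| X i m (HH f) erefl
  (ltac:(by rewrite cX)) hk.
apply: ideal_of_coeff => a ha.
case: (boolP (mdeg a == i)) => [/eqP dai|dai]; last exact: dhomog_nemf_coeff hf dai.
pose Sa := [set u : ('I_n * 'I_(NN d))%type | (u.2 < a u.1)%N].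
have fibSa : forall j, #|fib Sa j| = a j.
  move=> j; rewrite -(@card_fib_lt n d j (a j)); last first.
    by apply: leq_trans (dNN j); apply: ltnW.
  congr #|pred_of_set _|; apply/setP => u; rewrite !inE andbC.
  by case: (u.1 =P j) => [->|].
have pSa : prof Sa = a by apply/mnmP => j; rewrite profE fibSa.
have sSa : Sa \subset X.
  apply/subsetP => u; rewrite !inE => ua; apply: leq_trans ua _.
  by rewrite -ltnS (ltn_predK (ha u.1)).
have cSa : #|Sa| = i.
  by rewrite card_sum_fib -dai mdegE; apply: eq_bigr => j _; rewrite fibSa.
have hV : forall Y : {set ('I_n * 'I_(NN d))%type}, Y \subset X -> #|Y| = (i + m)%N -> V m (HH f) Y = 0.
  move=> Y sY cY; rewrite V_HH /HH (ideal_coeff hI) ?mulr0 // => j.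
  rewrite profE; apply: leq_ltn_trans (_ : #|fib X j| < d j)%N.
    by apply: subset_leq_card; apply/subsetP => u; rewrite !inE => /andP [uY ->]; rewrite andbT; have := subsetP sY u uY; rewrite inE.
  by rewrite fibX prednK.
have := main hV Sa sSa cSa; rewrite /HH pSa => /eqP; rewrite mulf_eq0 => /orP [|/eqP //].
rewrite /factm natr_prod prodf_seq_eq0 => /hasP [j _] /= /eqP.
move=> /eqP; apply: contraTeq => _; apply: fact_neq0 => c /andP [c0 caj]; apply: hk.
rewrite c0 /=; apply: leq_trans caj _; apply: leq_trans (leq_addr m _).
by rewrite -dai mdegE (bigD1 j) //= leq_addr.
Qed.
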